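(* Let $\alpha,\beta\in\mathbb R$ with $\alpha+\beta>0$, let $\sigma>0$ and $\gamma,\delta>0$. Set $$\gamma_0:=\begin{cases}0&\text{if }\alpha\ge\frac{1}{4\sigma},\\ -\alpha+\frac1{4\sigma}&\text{if }-\frac1{4\sigma}\le\alpha<\frac1{4\sigma},\\ 2\beta-2\sqrt{(\alpha+\beta)(\beta-\frac1{4\sigma})}&\text{if }\alpha<-\frac1{4\sigma}.\end{cases}$$ Then $\gamma_0\ge\max\{0,-\alpha+\frac1{4\sigma}\}$, and the following are equivalent: (i) $\dfrac{4\gamma\delta(1+\gamma\alpha)(1+\delta\beta)-(\gamma+\delta)^2}{2\gamma\delta^2(\alpha+\beta)}-\dfrac{\gamma}{2\sigma}>0$; (ii) $\frac1\gamma>\gamma_0$ and $\max\{0,\frac1\gamma+2\alpha-2\sqrt\Delta\}<\frac1\delta<\frac1\gamma+2\alpha+2\sqrt\Delta$, where $\Delta:=(\alpha+\beta)(\frac1\gamma+\alpha-\frac1{4\sigma})$. Consequently, there always exist $\gamma,\delta>0$ satisfying (i) and (ii). *)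

(* Defs.v *)
From Stdlib Require Export Reals Lra.
Open Scope R_scope.

Definition gamma0 (alpha beta sigma : R) : R :=
  if Rle_dec (/ (4 * sigma)) alpha then 0
  else if Rle_dec (- / (4 * sigma)) alpha then - alpha + / (4 * sigma)
  else 2 * beta - 2 * sqrt ((alpha + beta) * (beta - / (4 * sigma))).

Definition cond_i (alpha beta sigma gamma delta : R) : Prop :=
  (4 * gamma * delta * (1 + gamma * alpha) * (1 + delta * beta) - (gamma + delta) ^ 2)
    / (2 * gamma * delta ^ 2 * (alpha + beta)) - gamma / (2 * sigma) > 0.

Definition Delta (alpha beta sigma gamma : R) : R :=
  (alpha + beta) * (/ gamma + alpha - / (4 * sigma)).

Definition cond_ii (alpha beta sigma gamma delta : R) : Prop :=
  / gamma > gamma0 alpha beta sigma /\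
  Rmax 0 (/ gamma + 2 * alpha - 2 * sqrt (Delta alpha beta sigma gamma)) < / delta /\
  / delta < / gamma + 2 * alpha + 2 * sqrt (Delta alpha beta sigma gamma).

(* Main.v *)
Require Import Defs.
From Stdlib Require Import Reals Lra Psatz.
Open Scope R_scope.

Lemma keyF (alpha beta sigma gamma delta : R) (hab : alpha + beta > 0) (hs : sigma > 0)
  (hg : gamma > 0) (hd : delta > 0) :
  cond_i alpha beta sigma gamma delta <->
  4 * (/gamma + alpha) * (/delta + beta) - (/gamma + /delta)^2
     - 4 * / (4 * sigma) * (alpha + beta) > 0.
Proof.
  unfold cond_i.
  set (F := 4 * (/gamma + alpha) * (/delta + beta) - (/gamma + /delta)^2
     - 4 * / (4 * sigma) * (alpha + beta)).
  assert (E : (4 * gamma * delta * (1 + gamma * alpha) * (1 + delta * beta) - (gamma + delta) ^ 2)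
    / (2 * gamma * delta ^ 2 * (alpha + beta)) - gamma / (2 * sigma)
    = gamma / (2 * (alpha + beta)) * F).
  { unfold F. field. lra. }
  rewrite E.
  assert (P : gamma / (2 * (alpha + beta)) > 0).
  { apply Rdiv_lt_0_compat; lra. }
  split; intro H.
  - destruct (Rle_or_lt F 0) as [h|h]; auto.
    assert (gamma / (2 * (alpha + beta)) * F <= 0) by nra. lra.
  - nra.
Qed.

Lemma g0_bound (alpha beta sigma : R) (hab : alpha + beta > 0) (hs : sigma > 0) :
  gamma0 alpha beta sigma >= Rmax 0 (- alpha + / (4 * sigma)).
Proof.
  assert (hc : / (4 * sigma) > 0) by (apply Rinv_0_lt_compat; lra).
  set (c := / (4 * sigma)) in *.
  unfold gamma0; fold c.
  destruct (Rle_dec c alpha).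
  - rewrite Rmax_left; lra.
  - destruct (Rle_dec (- c) alpha).
    + rewrite Rmax_right; lra.
    + rewrite Rmax_right by lra.
      assert (hw := sqrt_sqrt ((alpha + beta) * (beta - c))).
      assert (hw0 := sqrt_pos ((alpha + beta) * (beta - c))).
      set (w := sqrt ((alpha + beta) * (beta - c))) in *.
      assert (w * w = (alpha + beta) * (beta - c)) by (apply hw; nra).
      assert (0 <= (alpha+beta - (beta - c))^2) by nra.
      nra.
Qed.

Lemma keyB (alpha beta sigma x y : R) (hab : alpha + beta > 0) (hs : sigma > 0)
  (hx : x > 0) (hy : y > 0) :
  4 * (x + alpha) * (y + beta) - (x + y)^2 - 4 * / (4 * sigma) * (alpha + beta) > 0 <->
  (x > gamma0 alpha beta sigma /\
   Rmax 0 (x + 2 * alpha - 2 * sqrt ((alpha + beta) * (x + alpha - / (4 * sigma)))) < y /\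
   y < x + 2 * alpha + 2 * sqrt ((alpha + beta) * (x + alpha - / (4 * sigma)))).
Proof.
  assert (hc : / (4 * sigma) > 0) by (apply Rinv_0_lt_compat; lra).
  unfold gamma0.
  set (c := / (4 * sigma)) in *.
  set (s := alpha + beta) in *.
  assert (hu := sqrt_pos (s * (x + alpha - c))).
  assert (huu := sqrt_sqrt (s * (x + alpha - c))).
  set (u := sqrt (s * (x + alpha - c))) in *.
  assert (EF : 4 * (x + alpha) * (y + beta) - (x + y)^2 - 4 * c * s
              = 4 * (s * (x + alpha - c)) - (y - (x + 2 * alpha))^2) by (unfold s; ring).
  rewrite EF. split.
  - intro H.
    assert (0 <= (y - (x+2*alpha))^2) by apply pow2_ge_0.
    assert (hD : s * (x + alpha - c) > 0) by lra.
    assert (uu : u * u = s * (x + alpha - c)) by (apply huu; lra).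
    assert (hsq : (y - (x + 2*alpha)) * (y - (x + 2*alpha)) < (2*u)*(2*u)) by (simpl in H; nra).
    assert (hup : y - (x + 2*alpha) < 2 * u) by nra.
    assert (hlo : y - (x + 2*alpha) > - 2 * u) by nra.
    split; [| split; [apply Rmax_lub_lt; lra | lra]].
    destruct (Rle_dec c alpha); [lra|].
    destruct (Rle_dec (- c) alpha); [nra|].
    assert (hw := sqrt_sqrt (s * (beta - c))).
    assert (hw0 := sqrt_pos (s * (beta - c))).
    set (w := sqrt (s * (beta - c))) in *.
    assert (ww : w * w = s * (beta - c)) by (apply hw; unfold s in *; nra).
    assert (hws : w > s) by (unfold s in *; nra).
    destruct (Rle_or_lt x (2 * beta - 2 * w)) as [hle|]; [|lra].
    exfalso.
    assert (u * u <= (w - s) * (w - s)) by (unfold s in *; nra).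
    assert (u <= w - s) by nra.
    unfold s in *; lra.
  - intros [_ [H1 H2]].
    assert (H1' := Rle_lt_trans _ _ _ (Rmax_r 0 _) H1).
    destruct (Rle_or_lt (s * (x + alpha - c)) 0) as [hD|hD].
    + assert (u = 0) by (unfold u; apply sqrt_neg_0; lra). lra.
    + assert (uu : u * u = s * (x + alpha - c)) by (apply huu; lra).
      nra.
Qed.

Lemma equiv_main (alpha beta sigma : R) (hab : alpha + beta > 0) (hs : sigma > 0)
  (gamma delta : R) (hg : gamma > 0) (hd : delta > 0) :
  cond_i alpha beta sigma gamma delta <-> cond_ii alpha beta sigma gamma delta.
Proof.
  rewrite keyF by assumption.
  unfold cond_ii, Delta.
  apply keyB; auto; apply Rinv_0_lt_compat; auto.
Qed.

Theorem lemma4p4 (alpha beta sigma : R) (hab : alpha + beta > 0) (hs : sigma > 0) :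
  gamma0 alpha beta sigma >= Rmax 0 (- alpha + / (4 * sigma)) /\
  (forall gamma delta : R, gamma > 0 -> delta > 0 ->
     (cond_i alpha beta sigma gamma delta <-> cond_ii alpha beta sigma gamma delta)) /\
  (exists gamma delta : R, gamma > 0 /\ delta > 0 /\
     cond_i alpha beta sigma gamma delta /\ cond_ii alpha beta sigma gamma delta).
Proof.
  split; [apply g0_bound; auto|].
  split; [intros; apply equiv_main; auto|].
  assert (hc : / (4 * sigma) > 0) by (apply Rinv_0_lt_compat; lra).
  set (x := Rabs (gamma0 alpha beta sigma) + 2 * Rabs alpha + / (4 * sigma) + 1).
  assert (h1 := Rle_abs (gamma0 alpha beta sigma)).
  assert (h2 := Rle_abs alpha). assert (h3 := Rle_abs (- alpha)).
  rewrite Rabs_Ropp in h3.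
  assert (h4 := Rabs_pos (gamma0 alpha beta sigma)).
  assert (hx : x > 0) by (unfold x; lra).
  assert (hy : x + 2 * alpha > 0) by (unfold x; lra).
  exists (/ x), (/ (x + 2 * alpha)).
  assert (hg : / x > 0) by (apply Rinv_0_lt_compat; lra).
  assert (hd : / (x + 2 * alpha) > 0) by (apply Rinv_0_lt_compat; lra).
  assert (Hi : cond_i alpha beta sigma (/ x) (/ (x + 2 * alpha))).
  { rewrite keyF by assumption.
    rewrite !Rinv_inv.
    assert (x + alpha - / (4 * sigma) > 0) by (unfold x; lra).
    replace (4 * (x + alpha) * (x + 2 * alpha + beta) - (x + (x + 2 * alpha)) ^ 2 -
      4 * / (4 * sigma) * (alpha + beta)) with
      (4 * ((alpha + beta) * (x + alpha - / (4 * sigma)))) by ring.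
    nra. }
  split; [exact hg|]. split; [exact hd|]. split; [exact Hi|].
  apply equiv_main; auto.
Qed.
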